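(* Let $X=\prod_{i\in I}X_i$ be a topological product and suppose that a subspace $Y$ of $X$ fills all finite subproducts of $X$. If $Y$ is a $T_3$-space, then each factor $X_i$ is also a $T_3$-space.
   Context: For nonempty $J\subseteq I$, $\pi_J\colon X\to X_J=\prod_{i\in J}X_i$ is the projection. A set $Y\subseteq X$ fills finite subproducts of $X$ if $\pi_J(Y)=X_J$ for every finite nonempty $J\subseteq I$. A space is $T_3$ if every open neighborhood $U$ of a point $x$ contains an open neighborhood $V$ of $x$ with $\overline{V}\subseteq U$ (no $T_1$ assumed). *)

(* Defs.v *)
From HB Require Import structures.
From mathcomp Require Import all_boot all_order all_algebra.
From mathcomp Require Import all_classical all_reals all_analysis.
Set Implicit Arguments. Unset Strict Implicit. Unset Printing Implicit Defensive.
Local Open Scope classical_set_scope.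

(* T3 as in the paper (no T1 assumed): every open neighbourhood U of x
   contains an open neighbourhood V of x with closure V included in U. *)
Definition T3_space (T : topologicalType) : Prop :=
  forall (x : T) (U : set T), open U -> U x ->
    exists V : set T, [/\ open V, V x & closure V `<=` U].

Definition proj_sub {I : Type} (X : I -> Type) (J : set I)
  (x : forall i, X i) : forall j : {i : I | J i}, X (proj1_sig j) :=
  fun j => x (proj1_sig j).

Definition fills_finite_subproducts {I : Type} (X : I -> Type)
  (Y : set (forall i, X i)) : Prop :=
  forall J : set I, finite_set J -> J !=set0 -> @proj_sub I X J @` Y = setT.

(* Main.v *)
Set Warnings "-notation-overridden,-ambiguous-paths,-notation-incompatible-prefix".
Require Import Defs.
From Stdlib Require List.
From HB Require Import structures.
From mathcomp Require Import all_boot all_order all_algebra.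
From mathcomp Require Import all_classical all_reals all_analysis.
Set Implicit Arguments. Unset Strict Implicit.
Local Open Scope classical_set_scope.

Section S.
Variables (I : Type) (X : I -> topologicalType).

Definition sat (s : list {j : I & set (X j)}) (q : forall j, X j) :=
  forall e, List.In e s -> projT2 e (q (projT1 e)).

Definition basic (p : forall j, X j) (N : set (forall j, X j)) :=
  exists s : list {j : I & set (X j)},
    (forall e, List.In e s -> open (projT2 e)) /\ sat s p /\
    (forall q, sat s q -> N q).

Lemma sat_app s1 s2 q : sat (s1 ++ s2) q <-> sat s1 q /\ sat s2 q.
Proof.
split.
  move=> h; split => e he; apply: h; apply: List.in_or_app; by [left|right].
move=> [h1 h2] e he; case: (List.in_app_or _ _ _ he) => {}he; [exact: h1|exact: h2].
Qed.

Lemma basic_filter p : Filter (basic p).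
Proof.
constructor.
- by exists [::]; split; [move=> e []|split; [move=> e []|]].
- move=> A B [s1 [os1 [ps1 hs1]]] [s2 [os2 [ps2 hs2]]]; exists (s1 ++ s2); split.
    by move=> e he; case: (List.in_app_or _ _ _ he) => {}he; [exact: os1|exact: os2].
  split; first by apply/sat_app.
  by move=> q /sat_app [q1 q2]; split; [apply: hs1|apply: hs2].
- by move=> A B AB [s [os [ps h]]]; exists s; split => //; split => // q /h /AB.
Qed.

Lemma nbhs_basic (p : prod_topology X) (N : set (prod_topology X)) :
  nbhs p N -> basic p N.
Proof.
have F := basic_filter p.
have := (@cvg_sup _ _ _ (basic p) p F).2.
move=> h; apply: h.
move=> i.
move=> A; rewrite nbhsE => -[B [oB pB] BA].
case: oB => C oC CB.
exists [:: existT _ i C]; split.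
  by move=> e [<-|[]].
split.
  by move=> e [<-|[]] /=; rewrite -CB in pB.
move=> q hq; apply: BA; rewrite -CB; exact: (hq _ (or_introl erefl)).
Qed.

Variable i : I.

Definition upd (b : forall j, X j) (a : X i) : forall j, X j :=
  fun k => match pselect (i = k) with
           | left h => eq_rect i (fun j => X j) a k h
           | right _ => b k end.

Lemma upd_i b a : upd b a i = a.
Proof.
rewrite /upd; case: pselect => // h.
by rewrite (Prop_irrelevance h erefl).
Qed.

Lemma upd_ne b a k : i <> k -> upd b a k = b k.
Proof. by rewrite /upd; case: pselect. Qed.

Lemma upd_eq b1 b2 a k : (i <> k -> b1 k = b2 k) -> upd b1 a k = upd b2 a k.
Proof. by rewrite /upd; case: pselect => // h /(_ h). Qed.

Lemma upd_self b : upd b (b i) = b.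
Proof.
apply: functional_extensionality_dep => k.
rewrite /upd; case: pselect => // h.
by destruct h.
Qed.

Lemma open_sec b s : (forall e, List.In e s -> open (projT2 e)) ->
  open [set a : X i | sat s (upd b a)].
Proof.
elim: s => [|e s IH] hs.
  rewrite (_ : [set a | _] = setT); first exact: openT.
  by apply/seteqP; split => a // _ e [].
rewrite (_ : [set a | _] = [set a | projT2 e (upd b a (projT1 e))] `&`
   [set a | sat s (upd b a)]).
  apply: openI; last by apply: IH => e' he'; apply: hs; right.
  have oe := hs e (or_introl erefl).
  clear IH hs; case: e oe => k B /= oB.
  case: (pselect (i = k)) => h.
    destruct h.
    rewrite (_ : [set a | _] = B) //.
    by apply/seteqP; split => a /=; rewrite upd_i.
  case: (pselect (B (b k))) => hB.
    rewrite (_ : [set a | _] = setT); first exact: openT.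
    by apply/seteqP; split => a // _ /=; rewrite upd_ne.
  rewrite (_ : [set a | _] = set0); first exact: open0.
  by apply/seteqP; split => a //= ; rewrite upd_ne.
apply/seteqP; split => a /=.
  by move=> h; split; [apply: h; left| move=> e' he'; apply: h; right].
by move=> [h1 h2] e' [<-|he']; [exact: h1| exact: h2].
Qed.

Lemma finite_list (l : list I) : finite_set [set k | List.In k l].
Proof.
elim: l => [|a l IH].
  by rewrite (_ : [set k | _] = set0) //; apply/seteqP; split => k.
rewrite (_ : [set k | _] = [set a] `|` [set k | List.In k l]).
  by rewrite finite_setU; split => //; exact: finite_set1.
apply/seteqP; split => k /=.
  by case => [->|h]; [left|right].
by case => [->|h]; [left|right].
Qed.

Lemma fill_list (Y : set (forall j, X j)) :
  @fills_finite_subproducts I (fun j => X j) Y ->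
  forall (l : list I) (g : forall j, X j), l <> nil ->
  exists2 y, Y y & forall k, List.In k l -> y k = g k.
Proof.
move=> Hf l g ln.
have ne : [set k | List.In k l] !=set0.
  by case: l ln => // a l _; exists a; left.
have := Hf _ (finite_list l) ne.
move=> E.
have : (@proj_sub I (fun j => X j) [set k | List.In k l] @` Y)
    (fun j => g (proj1_sig j)) by rewrite E.
case=> y Yy hy; exists y => // k hk.
exact: (congr1 (fun f => f (exist _ k hk)) hy).
Qed.

End S.

Unset Implicit Arguments. Set Strict Implicit.

Theorem proposition3p2 (I : Type) (X : I -> topologicalType)
  (Y : set (prod_topology X)) :
  @fills_finite_subproducts I (fun i => X i) Y ->
  T3_space (subspace Y) ->
  forall i : I, T3_space (X i).
Proof.
move=> Hf T3 i x U oU Ux.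
have ne1 : [set i] !=set0 by exists i.
have := Hf _ (finite_set1 i) ne1.
move=> E.
have : (@proj_sub I (fun j => X j) [set i] @` Y)
    (fun j => eq_rect i (fun k => X k) x _ (esym (proj2_sig j))) by rewrite E.
case=> y Yy hy.
have yi : y i = x.
  exact: (congr1 (fun f => f (exist (fun k => [set i] k) i erefl)) hy).
pose W : set (subspace Y) := Y `&` (fun q => U (q i)).
have oW : open W.
  rewrite /W setIC open_subspaceIT; apply: open_subspaceW.
  have hc := @proj_continuous {classic I} X i.
  exact: ((@continuousP (prod_topology (X : {classic I} -> topologicalType))
     (X i) (proj i)).1 hc U oU).
have Wy : W y by split => //; rewrite yi.
have [V' [oV' V'y clV']] := T3 y W oW Wy.
have nV' : nbhs (y : subspace Y) V' by apply: open_nbhs_nbhs; split.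
have nV2 : within Y (nbhs (y : prod_topology X)) V' by rewrite nbhs_subspace_in.
have [s [os [ys hs]]] := nbhs_basic nV2.
exists [set a : X i | sat s (upd y a)]; split.
- exact: open_sec.
- by rewrite /= -yi upd_self.
move=> z clz.
have [w Yw hw] := @fill_list I X Y Hf (i :: map (@projT1 _ _) s) (upd y z)
  ltac:(by []).
have wi : w i = z by rewrite hw ?upd_i //; left.
have wy : forall e, List.In e s -> i <> projT1 e -> w (projT1 e) = y (projT1 e).
  move=> e he ne; rewrite hw ?upd_ne //; right.
  exact: (List.in_map (@projT1 _ _) s e he).
suff : closure V' (w : subspace Y) by move=> /clV' [_]; rewrite wi.
move=> B nB.
have nB2 : within Y (nbhs (w : prod_topology X)) B by rewrite nbhs_subspace_in.
have [s' [os' [ws' hs']]] := nbhs_basic nB2.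
have nC : nbhs z [set a : X i | sat s' (upd w a)].
  apply: open_nbhs_nbhs; split; first exact: open_sec.
  by rewrite /= -wi upd_self.
have [a [Va Ca]] := clz _ nC.
have [t Yt ht] := @fill_list I X Y Hf
  (i :: map (@projT1 _ _) s ++ map (@projT1 _ _) s') (upd w a) ltac:(by []).
exists t; split.
- apply: (hs t) => // e he.
  rewrite ht; last first.
    right; apply: List.in_or_app; left.
    exact: (List.in_map (@projT1 _ _) s e he).
  rewrite (@upd_eq I X i w y a (projT1 e)); first exact: Va.
  by move=> ne; apply: wy.
- apply: (hs' t) => // e he.
  rewrite ht; last first.
    right; apply: List.in_or_app; right.
    exact: (List.in_map (@projT1 _ _) s' e he).
  exact: Ca.
Qed.
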